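(* Let $n\ge 2$ and let $S$ be an admissible peak set in $S^B_n$. Then $\max\{d_H(\sigma,\rho) : \sigma,\rho\in P^B(S;n)\}=n$.
   Context: $S^B_n$ is the set of bijections $\sigma$ of $\{-n,\dots,-1,1,\dots,n\}$ with $\sigma(-i)=-\sigma(i)$ for all $i$; a signed permutation is written in one-line notation $\sigma(1)\cdots\sigma(n)$. A signed permutation $\sigma$ has a peak at index $i\in\{2,\dots,n-1\}$ if $\sigma(i-1)<\sigma(i)>\sigma(i+1)$ (usual order on integers). $Peak(\sigma)$ is the set of indices where $\sigma$ has a peak, and for $S\subseteq[n]$, $P^B(S;n)=\{\sigma\in S^B_n : Peak(\sigma)=S\}$. $S$ is an admissible peak set if $P^B(S;n)\neq\emptyset$ (equivalently, $S\subseteq\{2,\dots,n-1\}$ and $S$ contains no two consecutive integers). The Hamming metric is $d_H(\sigma,\rho)=|\{i\in[n] : \sigma(i)\neq\rho(i)\}|$. *)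

(* Defs.v *)
From mathcomp Require Import all_boot all_order all_algebra all_fingroup.
Set Implicit Arguments. Unset Strict Implicit. Unset Printing Implicit Defensive.
Import Order.TTheory GRing.Theory Num.Theory.

(* Signed permutations of [n] (hyperoctahedral group S^B_n), encoded as a pair
   (p, s) of a permutation p of 'I_n and a sign vector s.  The one-line
   notation is sigma(i) = (-1)^{s(i-1)} * (p(i-1) + 1) for i in [n];
   this is the standard bijection with the bijections sigma of
   {-n..-1,1..n} satisfying sigma(-i) = -sigma(i). *)
Definition signed_perm (n : nat) : finType := ({perm 'I_n} * {ffun 'I_n -> bool})%type.

Definition sval n (sg : signed_perm n) (i : 'I_n) : int :=
  if sg.2 i then (- Posz (sg.1 i).+1)%R else Posz (sg.1 i).+1.

(* one-line value sigma(k) for a 1-based index k (0 outside [n], never used) *)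
Definition sval_nat n (sg : signed_perm n) (k : nat) : int :=
  match insub k.-1 with
  | Some i => if k == 0 then 0%R else sval sg i
  | None => 0%R
  end.

Definition is_peak n (sg : signed_perm n) (k : nat) : bool :=
  [&& 2 <= k, k <= n.-1,
      (sval_nat sg k.-1 < sval_nat sg k)%R & (sval_nat sg k.+1 < sval_nat sg k)%R].

Definition Peak n (sg : signed_perm n) : {set 'I_n.+1} :=
  [set k : 'I_n.+1 | is_peak sg k].

Definition PB n (S : {set 'I_n.+1}) : {set signed_perm n} :=
  [set sg | Peak sg == S].

Definition admissible n (S : {set 'I_n.+1}) : bool := PB S != set0.

Definition dH n (sg rh : signed_perm n) : nat :=
  #|[set i : 'I_n | sval sg i != sval rh i]|.

(* Main.v *)
Require Import Defs.
From mathcomp Require Import all_boot all_order all_algebra all_fingroup.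
From mathcomp Require Import zify.
Set Implicit Arguments. Unset Strict Implicit. Unset Printing Implicit Defensive.
Import Order.TTheory GRing.Theory Num.Theory.

Section S.
Variable n : nat.
Implicit Types sg : signed_perm n.

Lemma sval_inj sg : injective (Defs.sval sg).
Proof.
move=> i j; rewrite /Defs.sval.
case: (sg.2 i); case: (sg.2 j) => H.
- have : (sg.1 i : nat) = sg.1 j by lia.
  by move/val_inj/perm_inj.
- exfalso; lia.
- exfalso; lia.
- have : (sg.1 i : nat) = sg.1 j by lia.
  by move/val_inj/perm_inj.
Qed.

Definition rk sg i := #|[set j | (Defs.sval sg j < Defs.sval sg i)%R]|.

Lemma rk_lt sg i : rk sg i < n.
Proof.
have H : [set j | (Defs.sval sg j < Defs.sval sg i)%R] \subset [set~ i].
  by apply/subsetP => j; rewrite !inE => Hj; apply/eqP => E; rewrite E ltxx in Hj.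
have := subset_leq_card H; rewrite cardsC1 card_ord /rk.
have : 0 < n by case: (i) => /= k; lia.
lia.
Qed.

Lemma rk_mono sg i j : (Defs.sval sg i < Defs.sval sg j)%R -> rk sg i < rk sg j.
Proof.
move=> Hij; apply: proper_card; apply/properP; split.
  by apply/subsetP => k; rewrite !inE => Hk; apply: lt_trans Hk Hij.
by exists i; rewrite !inE ?ltxx.
Qed.

Lemma rk_ltE sg i j : (rk sg i < rk sg j) = (Defs.sval sg i < Defs.sval sg j)%R.
Proof.
case: (ltgtP (Defs.sval sg i) (Defs.sval sg j)) => H.
- by apply: rk_mono.
- by apply/negbTE; rewrite -leqNgt ltnW // rk_mono.
- by rewrite (sval_inj H) ltnn.
Qed.

Lemma rk_inj sg : injective (rk sg).
Proof.
move=> i j E; case: (ltgtP (Defs.sval sg i) (Defs.sval sg j)) => H.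
- by have := rk_mono H; rewrite E ltnn.
- by have := rk_mono H; rewrite E ltnn.
- exact: sval_inj H.
Qed.

Definition fp sg (i : 'I_n) : 'I_n := Ordinal (rk_lt sg i).
Lemma fp_inj sg : injective (fp sg).
Proof. by move=> i j /(congr1 val) /= /rk_inj. Qed.
Definition fm sg (i : 'I_n) : 'I_n := rev_ord (fp sg i).
Lemma fm_inj sg : injective (fm sg).
Proof. by move=> i j /rev_ord_inj /fp_inj. Qed.

Definition rplus sg : signed_perm n := (perm (@fp_inj sg), [ffun=> false]).
Definition rminus sg : signed_perm n := (perm (@fm_inj sg), [ffun=> true]).

Lemma sval_rplus sg i : Defs.sval (rplus sg) i = Posz (rk sg i).+1.
Proof. by rewrite /Defs.sval /= ffunE permE. Qed.

Lemma sval_rminus sg i : Defs.sval (rminus sg) i = (- Posz (n - rk sg i))%R.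
Proof.
rewrite /Defs.sval /= ffunE permE /=; have := rk_lt sg i.
by move=> H; congr (- Posz _)%R; lia.
Qed.

Lemma rplus_lt sg i j :
  (Defs.sval (rplus sg) i < Defs.sval (rplus sg) j)%R = (Defs.sval sg i < Defs.sval sg j)%R.
Proof. by rewrite !sval_rplus ltz_nat ltnS rk_ltE. Qed.

Lemma rminus_lt sg i j :
  (Defs.sval (rminus sg) i < Defs.sval (rminus sg) j)%R = (Defs.sval sg i < Defs.sval sg j)%R.
Proof.
rewrite !sval_rminus ltrN2 ltz_nat -rk_ltE.
have := rk_lt sg i; have := rk_lt sg j => h1 h2.
by apply/idP/idP => ?; lia.
Qed.

Lemma sval_nat_ord k : 0 < k <= n -> exists i : 'I_n, forall sg, sval_nat sg k = Defs.sval sg i.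
Proof.
move=> Hk; have lt : k.-1 < n by lia.
exists (Ordinal lt) => sg.
rewrite /sval_nat (insubT (fun x => x < n) lt) /=.
have -> : (k == 0) = false by lia.
by [].
Qed.

Lemma peak_eq rh sg :
  (forall i j, (Defs.sval rh i < Defs.sval rh j)%R = (Defs.sval sg i < Defs.sval sg j)%R) ->
  Peak rh = Peak sg.
Proof.
move=> H; apply/setP => k; rewrite !inE /is_peak.
case: (leqP 2 k) => //= k2; case: (leqP k n.-1) => //= kn.
have [i1 E1] := @sval_nat_ord k.-1 ltac:(lia).
have [i2 E2] := @sval_nat_ord k ltac:(lia).
have [i3 E3] := @sval_nat_ord k.+1 ltac:(lia).
by rewrite !E1 !E2 !E3 !H.
Qed.

Lemma count_bound (A : {set 'I_n}) (h : 'I_n -> nat) c b :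
  injective h -> (forall j, j \in A -> c <= h j < b) -> #|A| <= b - c.
Proof.
move=> hi hb.
have U : uniq (map h (enum A)) by rewrite map_inj_uniq // enum_uniq.
have Sb : {subset map h (enum A) <= iota c (b - c)}.
  move=> x /mapP [j]; rewrite mem_enum => jA ->; rewrite mem_iota.
  have := hb j jA; lia.
by have := uniq_leq_size U Sb; rewrite size_iota size_map -cardE.
Qed.

Lemma pval_inj sg : injective (fun j => val (sg.1 j)).
Proof. by move=> i j /val_inj /perm_inj. Qed.

Lemma key sg : 0 < n -> exists rh, Peak rh = Peak sg /\ forall i, Defs.sval sg i != Defs.sval rh i.
Proof.
move=> n0; have ltop : n.-1 < n by lia.
pose top : 'I_n := Ordinal ltop.
pose i0 := (sg.1)^-1%g top.
have Hi0 : sg.1 i0 = top by rewrite /i0 permKV.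
case s0 : (sg.2 i0).
- exists (rplus sg); split; first by apply: peak_eq; apply: rplus_lt.
  move=> i; rewrite sval_rplus.
  case si : (sg.2 i); first by rewrite /Defs.sval si; lia.
  have ni0 : i != i0 by apply/eqP => E; rewrite E s0 in si.
  have pit : (sg.1 i : nat) < n.-1.
    have : sg.1 i != top by rewrite -Hi0; apply/eqP => /perm_inj/eqP; rewrite (negbTE ni0).
    move=> /eqP H; have := ltn_ord (sg.1 i); move=> H2.
    have : (sg.1 i : nat) != n.-1 by apply/eqP => E; apply: H; apply: val_inj.
    lia.
  pose B := [set j | (Defs.sval sg i < Defs.sval sg j)%R].
  have cB : #|B| <= n.-1 - (sg.1 i).+1.
    apply: (count_bound (c := (sg.1 i).+1) (b := n.-1) (@pval_inj sg)) => j; rewrite inE /Defs.sval si.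
    case sj : (sg.2 j); first lia.
    move=> H; have nj : j != i0 by apply/eqP => E; rewrite E s0 in sj.
    have : sg.1 j != top by rewrite -Hi0; apply/eqP => /perm_inj/eqP; rewrite (negbTE nj).
    move=> /eqP H1; have : (sg.1 j : nat) != n.-1 by apply/eqP => E; apply: H1; apply: val_inj.
    have := ltn_ord (sg.1 j); move=> *; simpl in *; lia.
  have sub : ~: [set j | (Defs.sval sg j < Defs.sval sg i)%R] \subset i |: B.
    apply/subsetP => j; rewrite !inE -leNgt le_eqVlt => /orP [/eqP E|->]; last by rewrite orbT.
    by rewrite (sval_inj E) eqxx.
  have iB : i \notin B by rewrite inE ltxx.
  have := subset_leq_card sub; have := cardsU1 i B; rewrite iB /=.
  have := cardsC [set j | (Defs.sval sg j < Defs.sval sg i)%R]; rewrite card_ord.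
  rewrite -/(rk sg i) => h1 h2 h3.
  rewrite /Defs.sval si eqz_nat eqSS; apply/negP => /eqP E; rewrite -E in h1; move: h1 h3; set X := #|~: _|; move=> h1 h3; move: h2 h3 cB; set Y := #|i |: B|; set Z := #|B|; move: pit h1; set p := nat_of_ord _. lia.
- exists (rminus sg); split; first by apply: peak_eq; apply: rminus_lt.
  move=> i; rewrite sval_rminus.
  case si : (sg.2 i); last by rewrite /Defs.sval si; have := rk_lt sg i; lia.
  have ni0 : i != i0 by apply/eqP => E; rewrite E s0 in si.
  have pit : (sg.1 i : nat) < n.-1.
    have : sg.1 i != top by rewrite -Hi0; apply/eqP => /perm_inj/eqP; rewrite (negbTE ni0).
    move=> /eqP H; have := ltn_ord (sg.1 i); move=> H2.
    have : (sg.1 i : nat) != n.-1 by apply/eqP => E; apply: H; apply: val_inj.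
    lia.
  have cA : rk sg i <= n.-1 - (sg.1 i).+1.
    apply: (count_bound (c := (sg.1 i).+1) (b := n.-1) (@pval_inj sg)) => j; rewrite inE /Defs.sval si.
    case sj : (sg.2 j); last lia.
    move=> H; have nj : j != i0 by apply/eqP => E; rewrite E s0 in sj.
    have : sg.1 j != top by rewrite -Hi0; apply/eqP => /perm_inj/eqP; rewrite (negbTE nj).
    move=> /eqP H1; have : (sg.1 j : nat) != n.-1 by apply/eqP => E; apply: H1; apply: val_inj.
    have := ltn_ord (sg.1 j); move=> *; simpl in *; lia.
  rewrite /Defs.sval si; lia.
Qed.

End S.

Theorem theorem4p8 (n : nat) (S : {set 'I_n.+1}) :
  2 <= n -> admissible S ->
  \max_(pr in [set pr : signed_perm n * signed_perm n | (pr.1 \in PB S) && (pr.2 \in PB S)])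
      dH pr.1 pr.2 = n.
Proof.
move=> n2 /set0Pn [sg]; rewrite inE => /eqP Hsg.
apply/eqP; rewrite eqn_leq; apply/andP; split.
  apply/bigmax_leqP => pr _; rewrite /dH.
  by have := max_card [set i : 'I_n | Defs.sval pr.1 i != Defs.sval pr.2 i]; rewrite card_ord.
have [rh [Hrh Hd]] := @key n sg ltac:(lia).
have Hd' : dH sg rh = n.
  rewrite /dH.
  have -> : [set i : 'I_n | Defs.sval sg i != Defs.sval rh i] = setT by apply/setP => i; rewrite !inE Hd.
  by rewrite cardsT card_ord.
apply: (@leq_trans (dH (sg, rh).1 (sg, rh).2)); first by rewrite /= Hd'.
apply: leq_bigmax_cond; rewrite !inE /= Hrh Hsg eqxx.
by [].
Qed.
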